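(* Let $N\ge 1$ and $n\ge 1$ be integers, and let $x>1$ and $1\le y<2$ be real numbers. Let $\mathcal{S}_0,\dots,\mathcal{S}_{n-1}$ be nonempty sets of QPSK sequences of length $N$ such that, for every $0\le i\le n-1$: (a) $\mathrm{PEP}(\mathbf{s})\le x\,y^{2i}N$ for every $\mathbf{s}\in\mathcal{S}_i$; and (b) if $\mathbf{s}\in\mathcal{S}_i$ then $j^m\mathbf{s}\in\mathcal{S}_i$ for every $m\in\mathbb{Z}_4$. Let $\mathcal{A}$ be the set of all $2^{2n}$-QAM sequences associated with tuples $(\mathbf{s}_0,\dots,\mathbf{s}_{n-1})$ with $\mathbf{s}_i\in\mathcal{S}_i$ for all $i$. Then $$\mathrm{PMEPR}(\mathcal{A})<\frac{3}{4}\cdot\frac{x}{(1-\frac{y}{2})^2}.$$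
   Context: Let $j=\sqrt{-1}$. Fix $T>0$ and reals $f_0,\Delta f$ with $T\Delta f$ a positive integer; set $f_k=f_0+k\Delta f$. For a complex sequence $\mathbf{a}=(a_0,\dots,a_{N-1})$ define $S_{\mathbf{a}}(t)=\sum_{k=0}^{N-1}a_ke^{2\pi j f_k t}$, $P_{\mathbf{a}}(t)=|S_{\mathbf{a}}(t)|^2$, and $\mathrm{PEP}(\mathbf{a})=\sup_{t\in[0,T]}P_{\mathbf{a}}(t)$. A QPSK sequence of length $N$ is a sequence $\mathbf{s}=(s_0,\dots,s_{N-1})$ with every $s_k\in\{1,j,-1,-j\}$; $j^m\mathbf{s}=(j^ms_0,\dots,j^ms_{N-1})$. The $2^{2n}$-QAM sequence associated with QPSK sequences $\mathbf{s}_0,\dots,\mathbf{s}_{n-1}$, $\mathbf{s}_i=(s_{i,0},\dots,s_{i,N-1})$, is $\mathbf{a}=(a_0,\dots,a_{N-1})$ with $a_k=\frac{\sqrt2}{2}e^{\pi j/4}\sum_{i=0}^{n-1}2^{n-1-i}s_{i,k}$. The mean envelope power of $\mathcal{A}$ is $P_{av}(\mathcal{A})=\mathbb{E}\big[\frac1T\int_0^TP_{\mathbf{a}}(t)\,dt\big]=\mathbb{E}\|\mathbf{a}\|^2$, where the expectation is over $\mathbf{a}$ associated with $(\mathbf{s}_0,\dots,\mathbf{s}_{n-1})$ chosen uniformly at random from $\mathcal{S}_0\times\cdots\times\mathcal{S}_{n-1}$ (each $\mathbf{s}_i$ uniform in $\mathcal{S}_i$, independently). The peak-to-mean envelope power ratio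 is $\mathrm{PMEPR}(\mathcal{A})=\max_{\mathbf{a}\in\mathcal{A}}\mathrm{PEP}(\mathbf{a})/P_{av}(\mathcal{A})$. *)

(* Defs.v *)
From HB Require Import structures.
From mathcomp Require Import all_boot all_order all_algebra.
From mathcomp Require Import all_classical all_reals all_analysis.
From mathcomp Require Import complex.
Set Implicit Arguments. Unset Strict Implicit. Unset Printing Implicit Defensive.
Import Order.TTheory GRing.Theory Num.Theory.
Local Open Scope ring_scope.
Local Open Scope complex_scope.

Section OFDM.
Variable R : realType.

Definition expj (th : R) : R[i] := (cos th) +i* (sin th).

(* A QPSK symbol is encoded by its exponent m : 'I_4, standing for j^m. *)
Definition qpsk_val (m : 'I_4) : R[i] := 'i ^+ (m : nat).

Definition qpsk_seq (N : nat) := {ffun 'I_N -> 'I_4}.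

Definition qpsk_rot (N : nat) (m : 'I_4) (s : qpsk_seq N) : qpsk_seq N :=
  [ffun k => m + s k].

Definition Sig (f0 df : R) (N : nat) (a : 'I_N -> R[i]) (t : R) : R[i] :=
  \sum_(k < N) a k * expj (2 * pi * (f0 + (k : nat)%:R * df) * t).

Definition Pow (f0 df : R) (N : nat) (a : 'I_N -> R[i]) (t : R) : R :=
  Normc.normc (Sig f0 df a t) ^+ 2.

Definition PEP (T f0 df : R) (N : nat) (a : 'I_N -> R[i]) : R :=
  sup [set Pow f0 df a t | t in `[0, T]%classic].

Definition qpsk_cseq (N : nat) (s : qpsk_seq N) : 'I_N -> R[i] :=
  fun k => qpsk_val (s k).

Definition qam (n N : nat) (s : 'I_n -> qpsk_seq N) : 'I_N -> R[i] :=
  fun k => ((Num.sqrt 2 / 2)%:C * expj (pi / 4)) *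
           \sum_(i < n) (2 ^+ (n - 1 - i)%N)%:C * qpsk_val (s i k).

Definition tuples (n N : nat) (S : 'I_n -> {set qpsk_seq N}) :
  {set {ffun 'I_n -> qpsk_seq N}} :=
  [set s : {ffun 'I_n -> qpsk_seq N} | [forall i, s i \in S i]].

Definition sqnorm (N : nat) (a : 'I_N -> R[i]) : R :=
  \sum_(k < N) Normc.normc (a k) ^+ 2.

Definition Pav (n N : nat) (S : 'I_n -> {set qpsk_seq N}) : R :=
  (#|tuples S|%:R)^-1 * \sum_(s in tuples S) sqnorm (qam s).

Definition PMEPR (T f0 df : R) (n N : nat) (S : 'I_n -> {set qpsk_seq N}) : R :=
  (\big[Num.max/0]_(s in tuples S) PEP T f0 df (qam s)) / Pav S.

End OFDM.

(* Main.v *)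
Require Import Defs.
From HB Require Import structures.
From mathcomp Require Import all_boot all_order all_algebra.
From mathcomp Require Import all_classical all_reals all_analysis.
From mathcomp Require Import complex zify ring lra.
Import Order.TTheory GRing.Theory Num.Theory.
Local Open Scope ring_scope.
Local Open Scope complex_scope.
Section H.
Variable R : realType.
Notation nc := (@Normc.normc R).


Lemma nc_sqr (a b : R) : nc (a +i* b)%C ^+ 2 = a ^+ 2 + b ^+ 2.
Proof. by rewrite /= sqr_sqrtr // addr_ge0 // sqr_ge0. Qed.

Lemma nc_sqrC (z : R[i]) : (nc z ^+ 2)%:C = z * Num.conj z.
Proof.
case: z => a b; rewrite nc_sqr /=. apply/eqP; rewrite eq_complex /=; apply/andP; split; apply/eqP.
  ring. ring.
Qed.

Lemma nc_expj th : nc (expj th) = 1.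
Proof. by rewrite /expj /= cos2Dsin2 sqrtr1. Qed.

Lemma nc_i : nc 'i%C = 1.
Proof. by rewrite /= expr0n /= add0r expr1n sqrtr1. Qed.

Lemma nc_qv (m : 'I_4) : nc (qpsk_val R m) = 1.
Proof. rewrite /qpsk_val; elim: (m : nat) => [|k IH]; first by rewrite expr0 Normc.normc1.
by rewrite exprS Normc.normcM nc_i IH mulr1. Qed.

Lemma nc_real (r : R) : 0 <= r -> nc r%:C = r.
Proof. by move=> r0 /=; rewrite expr0n /= addr0 sqrtr_sqr ger0_norm. Qed.

Lemma nc_ge0 z : 0 <= nc z.
Proof. by case: z => a b /=; rewrite sqrtr_ge0. Qed.

Lemma nc_sum (I : finType) (P : pred I) (F : I -> R[i]) :
  nc (\sum_(i | P i) F i) <= \sum_(i | P i) nc (F i).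
Proof.
elim/big_rec2: _ => [|i y z _ Hz]; first by rewrite Normc.normc0.
apply: le_trans (le_normcD _ _) _; by rewrite lerD2l.
Qed.
Lemma i4 : ('i%C : R[i]) ^+ 4 = 1.
Proof. by rewrite (_ : 4 = 2 * 2)%N // exprM sqr_i expr2 mulrNN mulr1. Qed.

Lemma imod (k : nat) : ('i%C : R[i]) ^+ (k %% 4) = 'i%C ^+ k.
Proof. by rewrite {2}(divn_eq k 4) exprD mulnC exprM i4 expr1n mul1r. Qed.

Lemma qv_add (a b : 'I_4) : qpsk_val R (a + b) = qpsk_val R a * qpsk_val R b.
Proof. by rewrite /qpsk_val /= imod exprD. Qed.

Definition two : 'I_4 := inord 2.

Lemma qv_two : qpsk_val R two = -1.
Proof. by rewrite /qpsk_val /two inordK // sqr_i. Qed.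



Lemma two_two : two + two = 0 :> 'I_4.
Proof. by apply/val_inj; rewrite /= /two inordK. Qed.

Definition flip (n N : nat) (i0 : 'I_n) (s : {ffun 'I_n -> qpsk_seq N}) :
  {ffun 'I_n -> qpsk_seq N} :=
  [ffun j => if j == i0 then qpsk_rot two (s j) else s j].

Arguments flip {n N}.
Lemma flipK {n N} (i0 : 'I_n) : involutive (@flip n N i0).
Proof.
move=> s; apply/ffunP => j; rewrite !ffunE.
case: eqP => // _; apply/ffunP => k; rewrite !ffunE addrA two_two add0r //.
Qed.

Lemma flip_in {n N} (S : 'I_n -> {set qpsk_seq N}) (i0 : 'I_n) s :
  (forall (i : 'I_n) (s : qpsk_seq N) (m : 'I_4), s \in S i ->
      qpsk_rot m s \in S i) ->
  (flip i0 s \in tuples S) = (s \in tuples S).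
Proof.
move=> hS.
suff H : forall s, s \in tuples S -> flip i0 s \in tuples S.
  apply/idP/idP => [/H|/H//]; by rewrite flipK.
move=> {}s; rewrite !inE => /forallP hs; apply/forallP => j; rewrite ffunE.
case: eqP => _; [exact: hS | exact: hs].
Qed.

Lemma cross0 n N (S : 'I_n -> {set qpsk_seq N}) (i l : 'I_n) (k : 'I_N) :
  (forall (i : 'I_n) (s : qpsk_seq N) (m : 'I_4), s \in S i ->
      qpsk_rot m s \in S i) -> i != l ->
  \sum_(s in tuples S) qpsk_val R (s i k) * Num.conj (qpsk_val R (s l k)) = 0.
Proof.
move=> hS il.
set X := (X in X = 0).
have : X = - X.
  rewrite {1}/X (reindex_inj (can_inj (flipK i))) /=.
  rewrite (eq_bigl (fun s => s \in tuples S)); last by move=> s; rewrite flip_in.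
  rewrite /X -sumrN; apply: eq_bigr => s _.
  rewrite !ffunE eqxx eq_sym (negbTE il) ffunE qv_add qv_two.
  by rewrite mulN1r mulNr.
move/eqP; rewrite -subr_eq0 opprK -mulr2n mulrn_eq0 /= => /eqP //.
Qed.

Lemma qvJ (a : 'I_4) : qpsk_val R a * Num.conj (qpsk_val R a) = 1.
Proof. by rewrite -nc_sqrC nc_qv expr1n. Qed.

Lemma diag_sum n N (S : 'I_n -> {set qpsk_seq N}) (i l : 'I_n) (k : 'I_N) :
  (forall (i : 'I_n) (s : qpsk_seq N) (m : 'I_4), s \in S i ->
      qpsk_rot m s \in S i) ->
  \sum_(s in tuples S) qpsk_val R (s i k) * Num.conj (qpsk_val R (s l k)) =
  if i == l then #|tuples S|%:R else 0.
Proof.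
move=> hS; case: eqP => [<-|/eqP il]; last exact: cross0.
under eq_bigr => s _ do rewrite qvJ.
by rewrite sumr_const.
Qed.

Definition cc : R[i] := (Num.sqrt 2 / 2)%:C * expj (pi / 4).

Lemma cc_J : cc * Num.conj cc = (1/2)%:C.
Proof.
rewrite -nc_sqrC /cc Normc.normcM nc_expj mulr1 nc_real; last first.
  by rewrite divr_ge0 // sqrtr_ge0.
rewrite expr_div_n sqr_sqrtr //; by field.
Qed.

Lemma C_add (a b : R) : (a + b)%:C = a%:C + b%:C :> R[i].
Proof. by apply/eqP; rewrite eq_complex /= addr0 !eqxx. Qed.
Lemma C_mul (a b : R) : (a * b)%:C = a%:C * b%:C :> R[i].
Proof. by apply/eqP; rewrite eq_complex /= !mulr0 mul0r subr0 addr0 !eqxx. Qed.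
Lemma C_sum (I : finType) (P : pred I) (F : I -> R) :
  (\sum_(i | P i) F i)%:C = \sum_(i | P i) (F i)%:C :> R[i].
Proof. by elim/big_rec2: _ => // i a b _ <-; rewrite C_add. Qed.
Lemma C_nat (m : nat) : (m%:R : R)%:C = m%:R :> R[i].
Proof. by elim: m => // m IH; rewrite -addn1 !natrD C_add IH. Qed.
Lemma C_exp (a : R) (m : nat) : (a ^+ m)%:C = a%:C ^+ m :> R[i].
Proof. by elim: m => // m IH; rewrite !exprS C_mul IH. Qed.
Lemma J_add (a b : R[i]) : Num.conj (a + b) = Num.conj a + Num.conj b.
Proof. by case: a b => [a1 a2] [b1 b2]; apply/eqP; rewrite eq_complex /= opprD !eqxx. Qed.
Lemma J_mul (a b : R[i]) : Num.conj (a * b) = Num.conj a * Num.conj b.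
Proof. case: a b => [a1 a2] [b1 b2]; apply/eqP; rewrite eq_complex /=; apply/andP; split; apply/eqP; ring. Qed.
Lemma J_sum (I : finType) (P : pred I) (F : I -> R[i]) :
  Num.conj (\sum_(i | P i) F i) = \sum_(i | P i) Num.conj (F i).
Proof. elim/big_rec2: _ => [|i a b _ <-]; last by rewrite J_add.
by apply/eqP; rewrite eq_complex /= oppr0 !eqxx. Qed.
Lemma J_real (a : R) : Num.conj (a%:C) = a%:C :> R[i].
Proof. by apply/eqP; rewrite eq_complex /= oppr0 !eqxx. Qed.

Lemma sum_delta n (i : 'I_n) (f : 'I_n -> R[i]) (X : R[i]) :
  \sum_(l < n) f l * (if i == l then X else 0) = f i * X.
Proof.
rewrite (bigD1 i) //= eqxx big1 ?addr0 // => l; rewrite eq_sym => /negbTE ->.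
by rewrite mulr0.
Qed.

Lemma sum_sqnorm n N (S : 'I_n -> {set qpsk_seq N}) :
  (forall (i : 'I_n) (s : qpsk_seq N) (m : 'I_4), s \in S i ->
      qpsk_rot m s \in S i) ->
  \sum_(s in tuples S) sqnorm (qam R s) =
  #|tuples S|%:R * (N%:R * (1 / 2 * \sum_(i < n) (2 ^+ (n - 1 - i)) ^+ 2)).
Proof.
move=> hS; apply: (@complexI R).
rewrite C_sum.
under eq_bigr => s _.
  rewrite /sqnorm C_sum.
  under eq_bigr => k _.
    rewrite nc_sqrC /qam -/cc.  rewrite (J_mul cc) mulrACA cc_J rmorph_sum mulr_suml.
    under eq_bigr => i _.
      rewrite mulr_sumr.
      under eq_bigr => l _ do rewrite rmorphM /= J_real mulrACA.
      over.
    over.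
  rewrite -mulr_sumr.
  over.
rewrite -mulr_sumr exchange_big /=.
under eq_bigr => k _.
  rewrite exchange_big /=.
  under eq_bigr => i _.
    rewrite exchange_big /=.
    under eq_bigr => l _ do rewrite -mulr_sumr diag_sum //.
    over.
  over.
under eq_bigr => k _ do under eq_bigr => i _ do rewrite sum_delta.
rewrite sumr_const card_ord -mulr_suml !C_mul !C_nat C_sum.
under [in RHS]eq_bigr => i _ do rewrite C_exp expr2.
rewrite -mulr_natl; ring.
Qed.

Lemma Sig_le (N : nat) (a : 'I_N -> R[i]) f0 df t :
  nc (Sig f0 df a t) <= \sum_(k < N) nc (a k).
Proof.
rewrite /Sig; elim/big_rec2: _ => [|k y z _ Hz]; first by rewrite Normc.normc0.
apply: le_trans (le_normcD _ _) _.
by rewrite lerD // Normc.normcM nc_expj mulr1.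
Qed.

Lemma itvP (T t : R) : 0 <= t <= T -> `[0, T]%classic t.
Proof. by move=> h; rewrite /= in_itv /= h. Qed.

Lemma Pow_le_PEP (T f0 df : R) (N : nat) (s : qpsk_seq N) t : 0 <= t <= T ->
  Pow f0 df (qpsk_cseq R s) t <= PEP T f0 df (qpsk_cseq R s).
Proof.
move=> ht; apply: ub_le_sup; last by exists t => //; exact: itvP.
exists (N%:R ^+ 2) => _ [t' _ <-]; rewrite /Pow.
apply: lerXn2r; rewrite ?nnegrE ?nc_ge0 //.
apply: le_trans (Sig_le _ _ _ _ _) _.
by rewrite /qpsk_cseq; under eq_bigr => k _ do rewrite nc_qv; rewrite sumr_const card_ord.
Qed.

Lemma Sig_qam (f0 df t : R) (n N : nat) (s : 'I_n -> qpsk_seq N) :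
  Sig f0 df (qam R s) t =
  cc * \sum_(i < n) (2 ^+ (n - 1 - i))%:C * Sig f0 df (qpsk_cseq R (s i)) t.
Proof.
rewrite /Sig /qam -/cc.
under eq_bigr => k _ do rewrite -[cc * _ * _]mulrA mulr_suml.
rewrite -mulr_sumr exchange_big /=; congr (_ * _).
apply: eq_bigr => i _; rewrite mulr_sumr; apply: eq_bigr => k _.
by rewrite mulrA.
Qed.

Lemma nc_cc : nc cc = Num.sqrt 2 / 2.
Proof.
rewrite /cc Normc.normcM nc_expj mulr1 nc_real // divr_ge0 // sqrtr_ge0.
Qed.

Lemma PEP_qam_le (T f0 df x y : R) (n N : nat) (s : 'I_n -> qpsk_seq N) :
  0 < T -> 0 < x -> 0 <= y ->
  (forall i : 'I_n, PEP T f0 df (qpsk_cseq R (s i)) <= x * y ^+ (2 * i) * N%:R) ->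
  PEP T f0 df (qam R s) <=
  1 / 2 * (x * N%:R) * (\sum_(i < n) 2 ^+ (n - 1 - i) * y ^+ i) ^+ 2.
Proof.
move=> T0 x0 y0 hP.
set G := \sum_(i < n) _.
have G0 : 0 <= G by apply: sumr_ge0 => i _; rewrite mulr_ge0 // exprn_ge0.
set u := Num.sqrt (x * N%:R).
have u0 : 0 <= u by exact: sqrtr_ge0.
have hi : forall (i : 'I_n) t, 0 <= t <= T ->
    nc (Sig f0 df (qpsk_cseq R (s i)) t) <= y ^+ i * u.
  move=> i t ht.
  rewrite -(@ler_pXn2r _ 2) ?nnegrE ?nc_ge0 ?mulr_ge0 ?exprn_ge0 //.
  apply: le_trans (@Pow_le_PEP T f0 df N (s i) t ht) _.
  apply: le_trans (hP i) _.
  rewrite exprMn sqr_sqrtr; last by rewrite mulr_ge0 // ltW.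
  by rewrite -exprM (mulnC i) mulrCA mulrA.
rewrite /PEP; apply: ge_sup.
  by exists (Pow f0 df (qam R s) 0), 0 => //; apply: itvP; rewrite lexx ltW.
move=> _ [t /= ht <-]; rewrite /Pow.
have ht' : 0 <= t <= T by move: ht; rewrite in_itv.
have -> : 1 / 2 * (x * N%:R) * G ^+ 2 = (Num.sqrt 2 / 2 * (u * G)) ^+ 2.
  rewrite !exprMn sqr_sqrtr // sqr_sqrtr; last by rewrite mulr_ge0 // ltW.
  by field.
apply: lerXn2r; rewrite ?nnegrE ?nc_ge0 ?mulr_ge0 ?divr_ge0 ?sqrtr_ge0 //.
rewrite Sig_qam Normc.normcM nc_cc ler_wpM2l ?divr_ge0 ?sqrtr_ge0 //.
apply: le_trans (nc_sum _ _ _) _.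
rewrite /G mulr_sumr; apply: ler_sum => i _.
rewrite Normc.normcM nc_real ?exprn_ge0 // mulrCA ler_wpM2l ?exprn_ge0 //.
by rewrite mulrC; exact: hi.
Qed.
Lemma geoG (m : nat) (y : R) :
  (\sum_(i < m) 2 ^+ (m - 1 - i) * y ^+ i) * (2 - y) = 2 ^+ m - y ^+ m.
Proof.
elim: m => [|m IH]; first by rewrite big_ord0 mul0r !expr0 subrr.
rewrite big_ord_recr /= (_ : (m.+1 - 1 - m = 0)%N); last by lia.
have -> : \sum_(i < m) 2 ^+ (m.+1 - 1 - i) * y ^+ i =
          2 * \sum_(i < m) 2 ^+ (m - 1 - i) * y ^+ (i : nat) :> R.
  rewrite mulr_sumr; apply: eq_bigr => i _.
  have hi := ltn_ord i.
  by rewrite (_ : (m.+1 - 1 - i = (m - 1 - i).+1)%N) ?exprS ?mulrA //; lia.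
rewrite mulrDl -mulrA IH !exprS expr0; ring.
Qed.

Lemma geoH (m : nat) :
  3 * (\sum_(i < m) (2 ^+ (m - 1 - i)) ^+ 2) = (2 ^+ m) ^+ 2 - 1 :> R.
Proof.
elim: m => [|m IH]; first by rewrite big_ord0 mulr0 expr0 expr1n subrr.
rewrite big_ord_recr /= (_ : (m.+1 - 1 - m = 0)%N); last by lia.
have -> : \sum_(i < m) (2 ^+ (m.+1 - 1 - i)) ^+ 2 =
          4 * \sum_(i < m) (2 ^+ (m - 1 - i)) ^+ 2 :> R.
  rewrite mulr_sumr; apply: eq_bigr => i _.
  have hi := ltn_ord i.
  rewrite (_ : (m.+1 - 1 - i = (m - 1 - i).+1)%N) ?exprS //; last by lia.
  ring.
rewrite mulrDr mulrA (mulrC 3) -mulrA IH !exprS expr0; ring.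
Qed.

Lemma final_ineq (n : nat) (x y : R) : (1 <= n)%N -> 1 < x -> 1 <= y -> y < 2 ->
  x * (\sum_(i < n) 2 ^+ (n - 1 - i) * y ^+ i) ^+ 2 / (\sum_(i < n) (2 ^+ (n - 1 - i)) ^+ 2)
   < 3 / 4 * (x / (1 - y / 2) ^+ 2).
Proof.
move=> n1 x1 y1 y2.
set G := \sum_(i < n) 2 ^+ (n - 1 - i) * y ^+ i.
set H := \sum_(i < n) (2 ^+ (n - 1 - i)) ^+ 2.
have hG := geoG n y; have hH := geoH n; rewrite -/G -/H in hG hH.
have a2 : 2 <= 2 ^+ n :> R.
  rewrite -(subnK n1) exprD expr1.
  have : 1 <= 2 ^+ (n - 1) :> R by apply: exprn_ege1; lra.
  lra.
have b1 : 1 <= y ^+ n by apply: exprn_ege1; lra.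
have ba : y ^+ n <= 2 ^+ n.
  apply: lerXn2r; rewrite ?nnegrE; lra.
have Hp : 0 < H by nra.
rewrite ltr_pdivrMr //.
have D : 0 < 1 - y / 2 by lra.
rewrite (_ : 3 / 4 * (x / (1 - y / 2) ^+ 2) * H = (3 * x * H) / (4 * (1 - y / 2) ^+ 2)); last first.
  field; lra.
rewrite ltr_pdivlMr; last by rewrite mulr_gt0 // exprn_gt0.
have -> : x * G ^+ 2 * (4 * (1 - y / 2) ^+ 2) = x * (G * (2 - y)) ^+ 2 by field.
rewrite hG.
set a := 2 ^+ n in a2 ba hH *; set b := y ^+ n in b1 ba *.
have -> : 3 * x * H = x * (3 * H) by ring.
rewrite hH.
rewrite ltr_pM2l; last lra.
nra.
Qed.

Lemma tuples_ne n N (S : 'I_n -> {set qpsk_seq N}) :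
  (forall i, exists s, s \in S i) -> exists t, t \in tuples S.
Proof.
move=> hne.
exists [ffun i => odflt [ffun _ => ord0] [pick s in S i]].
rewrite inE; apply/forallP => i; rewrite ffunE.
case: pickP => [s //|h0]; have [s hs] := hne i; by move: (h0 s); rewrite hs.
Qed.
End H.

Theorem corollary1 (R : realType) (T f0 df : R) (N n : nat) (x y : R)
  (S : 'I_n -> {set qpsk_seq N}) :
  0 < T -> (exists m : nat, (0 < m)%N /\ T * df = m%:R) ->
  (1 <= N)%N -> (1 <= n)%N -> 1 < x -> 1 <= y -> y < 2 ->
  (forall i, exists s, s \in S i) ->
  (forall (i : 'I_n) (s : qpsk_seq N), s \in S i ->
      PEP T f0 df (qpsk_cseq R s) <= x * y ^+ (2 * i) * N%:R) ->
  (forall (i : 'I_n) (s : qpsk_seq N) (m : 'I_4), s \in S i ->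
      qpsk_rot m s \in S i) ->
  PMEPR T f0 df S < 3 / 4 * (x / (1 - y / 2) ^+ 2).
Proof.
move=> T0 _ N1 n1 x1 y1 y2 hne hPEP hrot.
have [t0 ht0] := @tuples_ne n N S hne.
have card0 : (0 < #|tuples S|)%N by apply/card_gt0P; exists t0.
set G := \sum_(i < n) 2 ^+ (n - 1 - i) * y ^+ i :> R.
set H := \sum_(i < n) (2 ^+ (n - 1 - i)) ^+ 2 :> R.
have HPav : Pav R S = N%:R * (1 / 2 * H).
  rewrite /Pav sum_sqnorm // mulKf // pnatr_eq0 -lt0n //.
have H0 : 0 < H.
  have := geoH R n; rewrite -/H.
  have : 2 <= 2 ^+ n :> R.
    rewrite -(subnK n1) exprD expr1.
    have : 1 <= 2 ^+ (n - 1) :> R by apply: exprn_ege1; lra.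
    lra.
  move=> h1 h2; nra.
have N0 : 0 < N%:R :> R by rewrite ltr0n.
have G0 : 0 <= G by apply: sumr_ge0 => i _; rewrite mulr_ge0 // exprn_ge0 //; lra.
have Mle : \big[Num.max/0]_(s in tuples S) PEP T f0 df (qam R s) <=
           1 / 2 * (x * N%:R) * G ^+ 2.
  apply: bigmax_le.
    by rewrite mulr_ge0 ?exprn_ge0 // mulr_ge0 // mulr_ge0 //; lra.
  move=> s; rewrite inE => /forallP hs.
  apply: PEP_qam_le => //; try lra.
  by move=> i; apply: hPEP; exact: hs.
rewrite /PMEPR HPav.
apply: (le_lt_trans (y := x * G ^+ 2 / H)).
  rewrite (_ : x * G ^+ 2 / H = (1 / 2 * (x * N%:R) * G ^+ 2) / (N%:R * (1 / 2 * H))); last first.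
    field; apply/andP; split; apply/negP => /eqP h; lra.
  by rewrite ler_pM2r // invr_gt0 mulr_gt0 // mulr_gt0 //; lra.
exact: final_ineq.
Qed.
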